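(* Let $(M,\le)$ be a finite modular lattice and $Q$ a saturated cover on $M$. If $x\le y\le w\le z$ in $M$ and $x\,\langle Q\rangle\,z$, then $y\,\langle Q\rangle\,w$.
   Context: A lattice $M$ is modular if $a\le b$ implies $a\vee(x\wedge b)=(a\vee x)\wedge b$. A transfer system on a finite lattice $(P,\le)$ is a partial order $R$ refining $\le$ closed under restriction: $x\,R\,z$ and $y\le z$ imply $(x\wedge y)\,R\,y$. For a set $Q$ of pairs $(x,y)$ with $x\le y$, $\langle Q\rangle$ is the intersection of all transfer systems containing $Q$. A covering diamond is a quadruple $x,y,x\wedge y,x\vee y$ with $x\ne y$ such that $x\vee y$ covers $x$ and $y$ and both cover $x\wedge y$. A saturated cover on $M$ is a set $Q$ of covering relations of $M$ such that (1) for all $x,y$, if $x\,Q\,(x\vee y)$ then $(x\wedge y)\,Q\,y$; (2) for every covering diamond, if three of its four covering relations lie in $Q$, so does the fourth. *)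

(* Defs.v *)
From HB Require Import structures.
From mathcomp Require Import all_boot all_order.
Set Implicit Arguments. Unset Strict Implicit. Unset Printing Implicit Defensive.
Import Order.TTheory.
Local Open Scope order_scope.

Section TransferSystems.
Context {d : Order.disp_t} {M : finLatticeType d}.

Definition modular : Prop :=
  forall a b x : M, a <= b -> a `|` (x `&` b) = (a `|` x) `&` b.

Definition transfer_system (R : M -> M -> Prop) : Prop :=
  [/\ (forall x, R x x),
      (forall x y, R x y -> R y x -> x = y),
      (forall x y z, R x y -> R y z -> R x z),
      (forall x y, R x y -> x <= y)
    & (forall x y z, R x z -> y <= z -> R (x `&` y) y)].

Definition gen_transfer (Q : M -> M -> Prop) (x y : M) : Prop :=
  forall R, transfer_system R -> (forall a b, Q a b -> R a b) -> R x y.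

Definition covers (a b : M) : Prop :=
  a < b /\ ~ (exists c, a < c /\ c < b).

Definition covering_diamond (x y : M) : Prop :=
  [/\ x <> y, covers x (x `|` y), covers y (x `|` y),
      covers (x `&` y) x & covers (x `&` y) y].

Definition saturated_cover (Q : M -> M -> Prop) : Prop :=
  [/\ (forall a b, Q a b -> covers a b),
      (forall x y, Q x (x `|` y) -> Q (x `&` y) y)
    & (forall x y, covering_diamond x y ->
        let q1 := Q (x `&` y) x in let q2 := Q (x `&` y) y in
        let q3 := Q x (x `|` y) in let q4 := Q y (x `|` y) in
        [/\ q2 -> q3 -> q4 -> q1,
            q1 -> q3 -> q4 -> q2,
            q1 -> q2 -> q4 -> q3
          & q1 -> q2 -> q3 -> q4])].

End TransferSystems.

(* Main.v *)
Require Import Defs.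
From HB Require Import structures.
From mathcomp Require Import all_boot all_order.
Import Order.TTheory.
Local Open Scope order_scope.
Set Implicit Arguments. Unset Strict Implicit.

Section Aux.
Context {d : Order.disp_t} {M : finLatticeType d}.

Lemma cover_up (x y : M) : x < y -> exists c, covers x c /\ c <= y.
Proof.
have H : forall (n : nat) (y : M), (#|[set u : M | ((x < u) && (u < y))%O]| < n)%N ->
   x < y -> exists c, covers x c /\ c <= y.
  elim=> [|n IH] y0; first by rewrite ltn0.
  move=> Hn Hxy.
  case: (boolP [exists u, (x < u) && (u < y0)]).
    case/existsP=> u /andP [Hxu Huy].
    have Hp : [set v : M | ((x < v) && (v < u))%O] \proper [set v : M | ((x < v) && (v < y0))%O].
      apply/properP; split.
        apply/subsetP=> v; rewrite !inE => /andP [H1 H2].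
        by rewrite H1 (lt_trans H2 Huy).
      by exists u; rewrite !inE ?Hxu ?Huy // ltxx andbF.
    have [c [Hc Hcu]] := IH u (leq_trans (proper_card Hp) (Hn : (_ <= n)%N)) Hxu.
    by exists c; split=> //; apply: le_trans Hcu (ltW Huy).
  move=> Hn0; exists y0; split=> //; split=> // [[c [H1 H2]]].
  by move/negP: Hn0; apply; apply/existsP; exists c; rewrite H1 H2.
by move=> Hxy; apply: (H _ y (ltnSn _) Hxy).
Qed.

Lemma cover_down (x y : M) : x < y -> exists c, x <= c /\ covers c y.
Proof.
have H : forall (n : nat) (x : M), (#|[set u : M | ((x < u) && (u < y))%O]| < n)%N ->
   x < y -> exists c, x <= c /\ covers c y.
  elim=> [|n IH] x0; first by rewrite ltn0.
  move=> Hn Hxy.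
  case: (boolP [exists u, (x0 < u) && (u < y)]).
    case/existsP=> u /andP [Hxu Huy].
    have Hp : [set v : M | ((u < v) && (v < y))%O] \proper [set v : M | ((x0 < v) && (v < y))%O].
      apply/properP; split.
        apply/subsetP=> v; rewrite !inE => /andP [H1 H2].
        by rewrite H2 (lt_trans Hxu H1).
      by exists u; rewrite !inE ?Hxu ?Huy // ltxx.
    have [c [Hc Hcu]] := IH u (leq_trans (proper_card Hp) (Hn : (_ <= n)%N)) Huy.
    by exists c; split=> //; apply: le_trans (ltW Hxu) Hc.
  move=> Hn0; exists x0; split=> //; split=> // [[c [H1 H2]]].
  by move/negP: Hn0; apply; apply/existsP; exists c; rewrite H1 H2.
by move=> Hxy; apply: (H _ x (ltnSn _) Hxy).
Qed.

Lemma cov_mid (a b m : M) : covers a b -> a <= m -> m <= b -> m = a \/ m = b.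
Proof.
move=> [Hab Hn] Ham Hmb.
case: (eqVneq m a) => [->|Hma]; first by left.
case: (eqVneq m b) => [->|Hmb']; first by right.
exfalso; apply: Hn; exists m; split.
  by rewrite lt_def Hma Ham.
by rewrite lt_neqAle Hmb' Hmb.
Qed.

Lemma cov_le (a b : M) : covers a b -> a <= b.
Proof. by case=> /ltW. Qed.

Lemma cov_neq (a b : M) : covers a b -> a <> b.
Proof. by case=> H _ E; rewrite E ltxx in H. Qed.


Section Main.
Context (Q : M -> M -> Prop) (Hmod : modular (M := M)) (HQ : saturated_cover Q).

Lemma modl (a b x : M) : a <= b -> a `|` (x `&` b) = (a `|` x) `&` b.
Proof. exact: Hmod. Qed.

Lemma JC (a b y : M) : covers a b -> a `|` y = b `|` y \/ covers (a `|` y) (b `|` y).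
Proof.
move=> Hab; have Hle := cov_le Hab.
case: (eqVneq (a `|` y) (b `|` y)) => [E|Hne]; first by left.
right; split.
  by rewrite lt_def eq_sym Hne leU2.
move=> [c [H1 H2]].
have Hac : a <= c by apply: le_trans (ltW H1); apply: leUl.
have Hyc : y <= c by apply: le_trans (ltW H1); apply: leUr.
have Hacb : a <= c `&` b by rewrite lexI Hac Hle.
have [E|E] := cov_mid Hab Hacb (leIr b c).
- have : c = a `|` y.
    have := modl (a:=y) (b:=c) b Hyc.
    by rewrite meetC E (joinC y b) (meet_r (ltW H2)) joinC => ->.
  by move=> Ec; rewrite Ec ltxx in H1.
- have : b `|` y <= c by rewrite leUx Hyc -E leIl.
  by rewrite lt_geF.
Qed.

Lemma KEY (u v y : M) : covers u v -> y `&` v <= u ->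
  covers (u `|` y) (v `|` y) /\ (Q (u `|` y) (v `|` y) -> Q u v).
Proof.
move=> Huv Hy; have Hle := cov_le Huv.
have Em : (u `|` y) `&` v = u by rewrite -modl // join_l.
split.
  case: (JC y Huv) => // E.
  exfalso; apply: (cov_neq Huv).
  by rewrite -Em E meetC joinKI.
move=> Hq.
case: HQ => _ H1 _.
have := H1 (u `|` y) v.
rewrite Em -joinA (joinC y v) joinA (join_r Hle).
by apply.
Qed.

Definition T (x z : M) := x <= z /\
  forall a b, x <= a -> covers a b -> b <= z -> Q a b.

Lemma Qlift (y z u v : M) : T y z -> covers u v -> v <= z -> y `&` v <= u -> Q u v.
Proof.
move=> [Hyz HT] Huv Hvz Hy.
have [Hc Hq] := KEY Huv Hy.
apply: Hq; apply: HT Hc _; first exact: leUr.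
by rewrite leUx Hvz Hyz.
Qed.

Lemma T_restr (x y z : M) : T x z -> y <= z -> T (x `&` y) y.
Proof.
move=> [Hxz HT] Hyz; split; first exact: leIr.
move=> a b Ha Hab Hb.
have Hbz : b <= z by apply: le_trans Hb Hyz.
have Hxb : x `&` b <= a.
  apply: le_trans Ha; rewrite lexI leIl /=.
  by apply: le_trans Hb; apply: leIr.
exact: (Qlift (conj Hxz HT) Hab Hbz Hxb).
Qed.

Lemma MC (a b y : M) : covers a b -> ~ (y `&` b <= a) -> covers (a `&` y) (b `&` y).
Proof.
move=> Hab Hn; have Hle := cov_le Hab.
have Hne : a `&` y != b `&` y.
  by apply/eqP=> E; apply: Hn; rewrite meetC -E leIl.
split; first by rewrite lt_def eq_sym Hne leI2.
move=> [c [H1 H2]].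
have Hcy : c <= y by apply: le_trans (ltW H2) (leIr _ _).
have Hac : a <= a `|` c by apply: leUl.
have Hcb : a `|` c <= b.
  by rewrite leUx Hle /=; apply: le_trans (ltW H2) (leIl _ _).
have [E|E] := cov_mid Hab Hac Hcb.
- have : c <= a `&` y by rewrite lexI Hcy -E leUr.
  by rewrite lt_geF.
- have Hcq : c <= b `&` y := ltW H2.
  have := modl (a:=c) (b := b `&` y) a Hcq.
  have -> : a `&` (b `&` y) = a `&` y by rewrite meetA (meet_l Hle).
  rewrite (join_l (ltW H1)) joinC E meetA meetxx => Ec.
  by rewrite -Ec ltxx in H2.
Qed.

Lemma T_trans (x y z : M) : T x y -> T y z -> T x z.
Proof.
move=> Txy Tyz.
have [Hxy HTxy] := Txy; have [Hyz HTyz] := Tyz.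
split; first exact: le_trans Hxy Hyz.
move=> a b Hxa Hab Hbz.
have Hle := cov_le Hab.
case: (boolP (y `&` b <= a)) => Hyb.
  exact: (Qlift Tyz Hab Hbz Hyb).
have Hyb' : ~ (y `&` b <= a) by apply/negP.
set p := a `&` y; set q := b `&` y.
have Hpq : covers p q := MC Hab Hyb'.
have Hpqle := cov_le Hpq.
have HQpq : Q p q.
  apply: HTxy Hpq _; first by rewrite lexI Hxa Hxy.
  exact: leIr.
have Haq : a `|` q = b.
  have Haqb : a `|` q <= b by rewrite leUx Hle leIl.
  have [E|E] := cov_mid Hab (leUl a q) Haqb => //.
  exfalso; apply: Hyb'; rewrite meetC.
  by rewrite -E leUr.
have Hqb : q <= b by exact: leIl.
have Emeet : forall e, p <= e -> e <= a -> e `&` q = p.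
  move=> e Hpe Hea; apply: le_anti; apply/andP; split; last first.
    by rewrite lexI Hpe Hpqle.
  rewrite /p lexI; apply/andP; split.
    by apply: le_trans (leIl _ _) Hea.
  by apply: le_trans (leIr _ _) (leIr _ _).
have Hpa : p <= a by exact: leIl.
have claim : forall (n : nat) (c : M), (#|[set u : M | (u < c)%O]| < n)%N ->
    p <= c -> c <= a -> Q c (c `|` q).
  elim=> [|n IH] c; first by rewrite ltn0.
  move=> Hn Hpc Hca.
  case: (eqVneq p c) => [<-|Hpc'].
    by rewrite (join_r Hpqle).
  have Hlt : p < c by rewrite lt_def eq_sym Hpc' Hpc.
  have [c' [Hpc'' Hc'c]] := cover_down Hlt.
  have Hc'le := cov_le Hc'c.
  have Hc'a : c' <= a := le_trans Hc'le Hca.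
  have Hp : [set u : M | (u < c')%O] \proper [set u : M | (u < c)%O].
    apply/properP; split.
      apply/subsetP=> v; rewrite !inE => H; exact: lt_le_trans H Hc'le.
    by exists c'; rewrite !inE ?ltxx //; case: Hc'c.
  have IHc := IH c' (leq_trans (proper_card Hp) (Hn : (_ <= n)%N)) Hpc'' Hc'a.
  set d' := c' `|` q.
  have Ecq := Emeet c Hpc Hca.
  have Ec'q := Emeet c' Hpc'' Hc'a.
  have Ejoin : c `|` d' = c `|` q by rewrite /d' joinA (join_l Hc'le).
  have Emt : c `&` d' = c'.
    rewrite /d' meetC -modl // meetC Ecq; exact: join_l.
  have Hcov1 : covers c (c `|` q).
    have Hh : c `&` q <= p by rewrite Ecq.
    have [H _] := KEY (y := c) Hpq Hh.
    by rewrite (join_r Hpc) joinC in H.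
  have Hcov2 : covers c' d'.
    have Hh : c' `&` q <= p by rewrite Ec'q.
    have [H _] := KEY (y := c') Hpq Hh.
    by rewrite (join_r Hpc'') joinC in H.
  have Hcov3 : covers d' (c `|` q).
    have Hh : q `&` c <= c' by rewrite meetC Ecq.
    have [H _] := KEY (y := q) Hc'c Hh.
    exact: H.
  have Hneq : c <> d'.
    move=> E; have : q <= c by rewrite E /d' leUr.
    move=> Hqc; move: Ecq; rewrite (meet_r Hqc) => Eqp.
    by apply: (cov_neq Hpq).
  have Hdia : covering_diamond c d'.
    by split; rewrite ?Ejoin ?Emt.
  case: HQ => _ _ H3.
  have := H3 c d' Hdia; rewrite /= Emt Ejoin => -[_ _ H _].
  have Hcz : c `|` q <= z.
    by apply: le_trans Hbz; rewrite leUx (le_trans Hca Hle) Hqb.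
  apply: H => //.
  - apply: (Qlift Tyz Hc'c) => //.
      exact: le_trans Hca (le_trans Hle Hbz).
    apply: le_trans Hpc''; rewrite /p lexI leIl andbT.
    exact: le_trans (leIr _ _) Hca.
  - apply: (Qlift Tyz Hcov3) => //.
    rewrite /d'; apply: le_trans (leUr q c'); rewrite /q lexI leIl andbT.
    apply: le_trans (leIr _ _) _; rewrite leUx (le_trans Hca Hle).
    exact: leIl.
have := claim _ a (ltnSn _) Hpa (lexx a).
by rewrite Haq.
Qed.


Lemma T_ts : transfer_system T.
Proof.
split.
- move=> x; split=> // a b Ha Hab Hb.
  by case: Hab => H _; move: (lt_le_trans H (le_trans Hb Ha)); rewrite ltxx.
- by move=> x y [H1 _] [H2 _]; apply: le_anti; rewrite H1 H2.
- exact: T_trans.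
- by move=> x y [].
- move=> x y z H Hyz; exact: T_restr H Hyz.
Qed.

Lemma T_Q a b : Q a b -> T a b.
Proof.
move=> Hq; case: HQ => Hc _ _; have Hab := Hc _ _ Hq.
split; first exact: cov_le.
move=> u v Hau Huv Hvb.
have Hub : u <= b := le_trans (cov_le Huv) Hvb.
have [Eu|Eu] := cov_mid Hab Hau Hub; last first.
  by case: Huv => H _; move: (lt_le_trans H Hvb); rewrite Eu ltxx.
subst u.
have [Ev|Ev] := cov_mid Hab (cov_le Huv) Hvb.
  by exfalso; apply: (cov_neq Huv).
by subst v.
Qed.

Lemma T_gen y w : T y w -> gen_transfer Q y w.
Proof.
move=> Tyw R HR HQR.
have [Hrefl _ Htr _ _] := HR.
have main : forall (n : nat) (y : M), (#|[set u : M | ((y <= u) && (u <= w))%O]| < n)%N ->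
   T y w -> R y w.
  elim=> [|n IH] y0; first by rewrite ltn0.
  move=> Hn [Hyw HT].
  case: (eqVneq y0 w) => [->|Hne]; first exact: Hrefl.
  have Hlt : y0 < w by rewrite lt_neqAle Hne Hyw.
  have [c [Hc Hcw]] := cover_up Hlt.
  have Hyc := cov_le Hc.
  have Hp : [set u : M | ((c <= u) && (u <= w))%O] \proper [set u : M | ((y0 <= u) && (u <= w))%O].
    apply/properP; split.
      apply/subsetP=> v; rewrite !inE => /andP [H1 H2].
      by rewrite H2 (le_trans Hyc H1).
    exists y0; first by rewrite inE lexx Hyw.
    rewrite inE; apply/negP => /andP [H1 _].
    by apply: (cov_neq Hc); apply: le_anti; rewrite Hyc H1.
  apply: (Htr _ c).
    apply: HQR; apply: HT Hc Hcw; exact: lexx.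
  apply: IH (leq_trans (proper_card Hp) (Hn : (_ <= n)%N)) _.
  split=> // a b Ha Hab Hb; apply: HT Hab Hb.
  exact: le_trans Hyc Ha.
exact: (main _ y (ltnSn _) Tyw).
Qed.

End Main.
End Aux.

Unset Implicit Arguments.

Theorem lemma3p10 (d : Order.disp_t) (M : finLatticeType d)
  (Q : M -> M -> Prop) :
  modular (M := M) -> saturated_cover Q ->
  forall x y w z : M, x <= y -> y <= w -> w <= z ->
    gen_transfer Q x z -> gen_transfer Q y w.
Proof.
move=> Hmod HQ x y w z Hxy Hyw Hwz Hg.
have Txz : T Q x z.
  apply: Hg; first exact: (T_ts Hmod HQ).
  move=> a b; exact: (T_Q HQ).
apply: (T_gen (Q := Q)).
case: Txz => Hxz HT; split=> // a b Ha Hab Hb.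
apply: HT Hab (le_trans Hb Hwz).
exact: le_trans Hxy Ha.
Qed.
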